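(* Let $\Lambda$ be a finite, strongly connected $k$-graph with no sources, and let $p$ be a probability measure on $\Lambda^\infty$ such that (a) the standard prefixing maps $\sigma_\lambda$ ($\lambda\in\Lambda$) and coding maps $\sigma^n$ ($n\in\mathbb N^k$) are measurable; (b) $p(Z(v))>0$ for every $v\in\Lambda^0$; (c) for every edge $\lambda$ (i.e. $\lambda\in\Lambda^{e_i}$ for some $i$), $p\circ\sigma_\lambda\ll p$ on $Z(s(\lambda))$ and the Radon–Nikodym derivative $\Phi_{\sigma_\lambda}=d(p\circ\sigma_\lambda)/dp$ is strictly positive $p$-a.e. on $Z(s(\lambda))$. Then the sets $D_\lambda=Z(s(\lambda))$, the maps $\sigma_\lambda$ and the maps $\sigma^n$ form a $\Lambda$-semibranching function system on $(\Lambda^\infty,p)$.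
   Context: $k$-graph: countable small category $\Lambda$ with degree functor $d:\Lambda\to\mathbb N^k$ with unique factorization; vertices $\Lambda^0$, range/source $r,s$; finite (each $\Lambda^n$ finite), no sources, strongly connected ($v\Lambda w\neq\emptyset$ for all vertices). $\Lambda^\infty$: infinite paths, i.e. degree-preserving functors $x:\Omega_k\to\Lambda$ ($\Omega_k$: morphisms $(p,q)$, $p\le q$ in $\mathbb N^k$, $d(p,q)=q-p$), $r(x)=x(0,0)$; cylinder sets $Z(\lambda)=\{x:x(0,d(\lambda))=\lambda\}$ form a compact open basis, with associated Borel $\sigma$-algebra. Standard coding maps: $\sigma^m(x)(p,q)=x(p+m,q+m)$. Standard prefixing maps: $\sigma_\lambda:Z(s(\lambda))\to Z(\lambda)$, $\sigma_\lambda(x)=\lambda x$, the unique infinite path with $(\lambda x)(0,d(\lambda))=\lambda$ and $\sigma^{d(\lambda)}(\lambda x)=x$. A semibranching function system on $(X,\mu)$ is a finite family of measurable maps $\tau_i:D_i\to X$, $R_i=\tau_i(D_i)$, with $\mu(X\setminus\bigcup R_i)=0$, $\mu(R_i\cap R_j)=0$ ($i\ne j$), and $d(\mu\circ\tau_i)/d\mu>0$ a.e. on $D_i$; $\tau$ is a coding map if $\tau\circ\tau_i=\mathrm{id}_{D_i}$. A $\Lambda$-semibranching function system on $(X,\mu)$: sets $D_\lambda$, prefixing maps $\tau_\lambda:D_\lambda\to X$, coding maps $\tau^m$ with (a) each $\{\tau_\lambda\}_{\lambda\in\Lambda^m}$ a semibranching function system with coding map $\tau^m$; (b) $\tau_v=\mathrm{id}$,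 $\mu(D_v)>0$; (c) $R_\nu\subseteq D_\lambda$ a.e. and $\tau_\lambda\tau_\nu=\tau_{\lambda\nu}$ a.e. for $\nu\in s(\lambda)\Lambda$; (d) $\tau^m\tau^n=\tau^{m+n}$. *)

(* Defs.v *)
From HB Require Import structures.
From mathcomp Require Import all_boot all_order all_algebra.
From mathcomp Require Import all_classical all_reals all_analysis.
From mathcomp Require Import measurable_realfun.

Set Implicit Arguments.
Unset Strict Implicit.
Unset Printing Implicit Defensive.

Import Order.TTheory GRing.Theory Num.Theory.
Local Open Scope classical_set_scope.
Local Open Scope ring_scope.

Definition NN (k : nat) := 'I_k -> nat.
Definition dzero (k : nat) : NN k := fun _ => 0%N.
Definition dadd (k : nat) (m n : NN k) : NN k := fun i => (m i + n i)%N.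
Definition evec (k : nat) (i : 'I_k) : NN k := fun j => nat_of_bool (j == i).

Lemma daddAC (k : nat) (p m n : NN k) :
  dadd (dadd p m) n = dadd (dadd p n) m.
Proof.
apply: functional_extensionality_dep => i; rewrite /dadd.
by rewrite addnAC.
Qed.

(* kcomp a b is the composite "a b" (a after b, s a = r b); it is only  *)
(* meaningful for composable pairs.                                    *)
Record kgraph (k : nat) := KGraph {
  kvert : Type;
  kpath : Type;
  krng : kpath -> kvert;
  ksrc : kpath -> kvert;
  kcomp : kpath -> kpath -> kpath;
  kvid : kvert -> kpath;
  kdeg : kpath -> NN k;
  path_countable : exists f : kpath -> nat, injective f;
  rng_vid : forall v, krng (kvid v) = v;
  src_vid : forall v, ksrc (kvid v) = v;
  rng_comp : forall a b, ksrc a = krng b -> krng (kcomp a b) = krng a;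
  src_comp : forall a b, ksrc a = krng b -> ksrc (kcomp a b) = ksrc b;
  comp_vidl : forall a, kcomp (kvid (krng a)) a = a;
  comp_vidr : forall a, kcomp a (kvid (ksrc a)) = a;
  compA : forall a b c, ksrc a = krng b -> ksrc b = krng c ->
            kcomp a (kcomp b c) = kcomp (kcomp a b) c;
  deg_vid : forall v, kdeg (kvid v) = @dzero k;
  deg_comp : forall a b, ksrc a = krng b -> kdeg (kcomp a b) = dadd (kdeg a) (kdeg b);
  unique_factorization : forall a (m n : NN k), kdeg a = dadd m n ->
     exists! bc : kpath * kpath,
       [/\ ksrc bc.1 = krng bc.2, kdeg bc.1 = m, kdeg bc.2 = n & a = kcomp bc.1 bc.2]
}.

Arguments krng {k} _ _.
Arguments ksrc {k} _ _.
Arguments kcomp {k} _ _ _.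
Arguments kvid {k} _ _.
Arguments kdeg {k} _ _.

Section KGraphProps.
Variables (k : nat) (L : kgraph k).

Definition kg_finite : Prop :=
  forall n : NN k, finite_set [set a : kpath L | kdeg L a = n].

Definition kg_no_sources : Prop :=
  forall (v : kvert L) (n : NN k), exists a : kpath L, krng L a = v /\ kdeg L a = n.

Definition kg_strongly_connected : Prop :=
  forall v w : kvert L, exists a : kpath L, krng L a = v /\ ksrc L a = w.

Definition kg_edge (a : kpath L) : Prop := exists i : 'I_k, kdeg L a = evec i.

(* Infinite paths: degree-preserving functors x : Omega_k -> Lambda.   *)
(* A morphism (p, q), p <= q, of Omega_k is encoded as (p, n) with      *)
(* q = p + n, so  ipfun x p n = x(p, p + n).                           *)
Definition is_ipath (x : NN k -> NN k -> kpath L) : Prop :=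
  [/\ (forall p n, kdeg L (x p n) = n),
      (forall p, x p (@dzero k) = kvid L (krng L (x p (@dzero k)))),
      (forall p n m, ksrc L (x p n) = krng L (x (dadd p n) m)) &
      (forall p n m, kcomp L (x p n) (x (dadd p n) m) = x p (dadd n m))].

Record ipath := IPath {
  ipfun :> NN k -> NN k -> kpath L;
  ipfunP : is_ipath ipfun
}.

Definition iprng (x : ipath) : kvert L := krng L (x (@dzero k) (@dzero k)).

Definition cyl (a : kpath L) : set ipath :=
  [set x : ipath | x (@dzero k) (kdeg L a) = a].

Lemma shift_subproof (m : NN k) (x : ipath) :
  is_ipath (fun p n => x (dadd p m) n).
Proof.
case: x => f [H1 H2 H3 H4] /=; split.
- by move=> p n; exact: H1.
- by move=> p; exact: H2.
- by move=> p n m'; rewrite daddAC; exact: H3.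
- by move=> p n m'; rewrite daddAC; exact: H4.
Qed.

Definition kshift (m : NN k) (x : ipath) : ipath :=
  IPath (shift_subproof m x).

(* standard prefixing map sigma_lambda : x |-> lambda x, the unique
   infinite kpath y with y(0, d(lambda)) = lambda and sigma^{d(lambda)} y = x.
   Outside its domain Z(s(lambda)) it is (arbitrarily) the identity. *)
Definition kprefix_spec (a : kpath L) (x y : ipath) : Prop :=
  y (@dzero k) (kdeg L a) = a /\ kshift (kdeg L a) y = x.

Definition kprefix (a : kpath L) (x : ipath) : ipath :=
  match pselect (exists y, kprefix_spec a x y) with
  | left H => proj1_sig (cid H)
  | right _ => x
  end.

End KGraphProps.

Arguments ipath {k} L.
Arguments cyl {k L} a.
Arguments kshift {k L} m x.
Arguments kprefix {k L} a x.
Arguments iprng {k L} x.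

(* Measurable structure on Lambda^infty: sigma-algebra generated by    *)
(* the cylinder sets.  A base point x0 is needed because MathComp's     *)
(* measurable types are pointed.                                       *)
Definition ipathP (k : nat) (L : kgraph k) (x0 : ipath L) := ipath L.
Arguments ipathP {k L} x0.

Section PointedInst.
Variables (k : nat) (L : kgraph k) (x0 : ipath L).
HB.instance Definition _ := gen_eqMixin (ipathP x0).
HB.instance Definition _ := gen_choiceMixin (ipathP x0).
HB.instance Definition _ := isPointed.Build (ipathP x0) x0.
End PointedInst.

Definition cylinders (k : nat) (L : kgraph k) (x0 : ipath L) :
  set (set (ipathP x0)) := [set C | exists a : kpath L, C = cyl a].
Arguments cylinders {k L} x0.

Definition IPspace (k : nat) (L : kgraph k) (x0 : ipath L) :=
  g_sigma_algebraType (cylinders x0).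
Arguments IPspace {k L} x0.

Section SBFS.
Context {d : measure_display} {X : measurableType d} {R : realType}.
Variable mu : {measure set X -> \bar R}.
Local Open Scope ereal_scope.

(* "d(mu o tau)/d mu > 0 mu-a.e. on D": mu o tau : E |-> mu (tau E)
   (E measurable, E included in D) is a measure on D having a
   Radon-Nikodym derivative w.r.t. mu, and that derivative is > 0 a.e.
   on D. *)
Definition is_RN_deriv (D : set X) (tau : X -> X) (f : X -> \bar R) : Prop :=
  [/\ measurable_fun D f,
      (forall x, D x -> 0 <= f x) &
      (forall E, measurable E -> E `<=` D ->
         measurable (tau @` E) /\ mu (tau @` E) = \int[mu]_(x in E) f x)].

Definition pos_RN_deriv (D : set X) (tau : X -> X) : Prop :=
  exists f, is_RN_deriv D tau f /\ {ae mu, forall x, D x -> 0 < f x}.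

Definition abs_cont_on (D : set X) (tau : X -> X) : Prop :=
  forall E, measurable E -> E `<=` D -> mu E = 0 -> mu (tau @` E) = 0.

Definition SBFS {I : Type} (J : set I) (D : I -> set X) (tau : I -> X -> X)
  : Prop :=
  [/\ finite_set J,
      (forall i, J i -> measurable (D i) /\ measurable_fun (D i) (tau i)),
      mu.-negligible (~` \bigcup_(i in J) (tau i @` D i)),
      (forall i j, J i -> J j -> i <> j ->
          mu.-negligible (tau i @` D i `&` tau j @` D j)) &
      (forall i, J i -> pos_RN_deriv (D i) (tau i))].

Definition coding_map {I : Type} (J : set I) (D : I -> set X)
  (tau : I -> X -> X) (c : X -> X) : Prop :=
  forall i, J i -> forall x, D i x -> c (tau i x) = x.

Definition Lambda_SBFS {k : nat} (L : kgraph k) (D : kpath L -> set X)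
  (tau : kpath L -> X -> X) (code : NN k -> X -> X) : Prop :=
  [/\
      (forall m : NN k,
         SBFS [set a | kdeg L a = m] D tau /\
         coding_map [set a | kdeg L a = m] D tau (code m)),
      (forall v : kvert L,
         (forall x, D (kvid L v) x -> tau (kvid L v) x = x) /\
         0 < mu (D (kvid L v))),
      (forall a b : kpath L, ksrc L a = krng L b ->
         mu.-negligible (tau b @` D b `\` D a) /\
         {ae mu, forall x, D b x -> tau a (tau b x) = tau (kcomp L a b) x}) &
      (forall (m n : NN k) (x : X), code m (code n x) = code (dadd m n) x)].

End SBFS.

(* Main.v *)
Require Import Defs.
From HB Require Import structures.
From mathcomp Require Import all_boot all_order all_algebra.
From mathcomp Require Import all_classical all_reals all_analysis.
From mathcomp Require Import measurable_realfun.
Local Open Scope classical_set_scope.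
Local Open Scope ring_scope.
Local Notation dadd := Defs.dadd.
Local Notation kcomp := Defs.kcomp.

Section Comb.
Variables (k : nat) (L : kgraph k).

Lemma dadd0n (m : NN k) : dadd (@dzero k) m = m.
Proof. by apply: functional_extensionality_dep => i; rewrite /dadd /dzero add0n. Qed.
Lemma daddn0 (m : NN k) : dadd m (@dzero k) = m.
Proof. by apply: functional_extensionality_dep => i; rewrite /dadd /dzero addn0. Qed.
Lemma daddC (m n : NN k) : dadd m n = dadd n m.
Proof. by apply: functional_extensionality_dep => i; rewrite /dadd addnC. Qed.
Lemma daddA (a b c : NN k) : dadd (dadd a b) c = dadd a (dadd b c).
Proof. by apply: functional_extensionality_dep => i; rewrite /dadd addnA. Qed.

Lemma uf_eq (b1 c1 b2 c2 : kpath L) :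
  ksrc L b1 = krng L c1 -> ksrc L b2 = krng L c2 ->
  kdeg L b1 = kdeg L b2 -> kdeg L c1 = kdeg L c2 ->
  kcomp L b1 c1 = kcomp L b2 c2 -> b1 = b2 /\ c1 = c2.
Proof.
move=> s1 s2 d1 d2 e.
have [[u v] [_ U]] := unique_factorization (deg_comp s1).
have h1 := U (b1, c1) (And4 s1 erefl erefl erefl).
have h2 := U (b2, c2) (And4 s2 (esym d1) (esym d2) e).
by rewrite h1 in h2; case: h2 => -> ->.
Qed.

Arguments uf_eq {b1 c1 b2 c2}.

Lemma deg0_vid (a : kpath L) : kdeg L a = @dzero k -> a = kvid L (krng L a).
Proof.
move=> da.
have [] := @uf_eq a (kvid L (ksrc L a)) (kvid L (krng L a)) a.
- by rewrite rng_vid.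
- by rewrite src_vid.
- by rewrite deg_vid.
- by rewrite deg_vid.
- by rewrite comp_vidl comp_vidr.
by [].
Qed.

Arguments deg0_vid {a}.

Implicit Types x y z : ipath L.

Lemma ip_deg x p n : kdeg L (x p n) = n.
Proof. by case: x => f [H1 H2 H3 H4]. Qed.
Lemma ip_vid x p : x p (@dzero k) = kvid L (krng L (x p (@dzero k))).
Proof. by case: x => f [H1 H2 H3 H4]. Qed.
Lemma ip_src x p n m : ksrc L (x p n) = krng L (x (dadd p n) m).
Proof. by case: x => f [H1 H2 H3 H4]. Qed.
Lemma ip_comp x p n m : kcomp L (x p n) (x (dadd p n) m) = x p (dadd n m).
Proof. by case: x => f [H1 H2 H3 H4]. Qed.

Lemma ip_rng x p n : krng L (x p n) = krng L (x p (@dzero k)).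
Proof.
have := ip_comp x p (@dzero k) n; rewrite daddn0 dadd0n => <-.
by rewrite rng_comp // -{2}(daddn0 p); exact: ip_src.
Qed.

Lemma ipath_eq x y : ipfun x = ipfun y -> x = y.
Proof.
case: x => f Hf; case: y => g Hg /= e; subst g.
by congr IPath; exact: Prop_irrelevance.
Qed.

Lemma ipath_ext x y : (forall q, x (@dzero k) q = y (@dzero k) q) -> x = y.
Proof.
move=> e; apply: ipath_eq; apply: functional_extensionality_dep => p.
apply: functional_extensionality_dep => n.
have hx := ip_comp x (@dzero k) p n; have hy := ip_comp y (@dzero k) p n.
rewrite dadd0n in hx hy.
have sx := ip_src x (@dzero k) p n; have sy := ip_src y (@dzero k) p n.
rewrite dadd0n in sx sy.
have [] := uf_eq sx sy _ _ _.
- by rewrite !ip_deg.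
- by rewrite !ip_deg.
- by rewrite hx hy e.
by [].
Qed.

Lemma shift_shift m n x : kshift m (kshift n x) = kshift (dadd m n) x.
Proof.
apply: ipath_eq => /=; apply: functional_extensionality_dep => p.
by rewrite daddA.
Qed.

Lemma shift0 x : kshift (@dzero k) x = x.
Proof.
apply: ipath_eq => /=; apply: functional_extensionality_dep => p.
by rewrite daddn0.
Qed.

Lemma mk_ipath (F : NN k -> kpath L) :
  (forall q, kdeg L (F q) = q) ->
  (forall q r, exists u, [/\ ksrc L (F q) = krng L u, kdeg L u = r &
                           F (dadd q r) = kcomp L (F q) u]) ->
  exists x : ipath L, forall q, x (@dzero k) q = F q.
Proof.
move=> Fd Fp.
have : forall pn : NN k * NN k, exists bc : kpath L * kpath L,
   [/\ ksrc L bc.1 = krng L bc.2, kdeg L bc.1 = pn.1, kdeg L bc.2 = pn.2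
    & F (dadd pn.1 pn.2) = kcomp L bc.1 bc.2].
  by move=> [p n]; have [bc [? _]] := unique_factorization (Fd (dadd p n)); exists bc.
case/choice => S HS.
pose X := fun p n => (S (p, n)).2.
have Xd p n : kdeg L (X p n) = n by have [] := HS (p, n).
have key p n m : (S (dadd p n, m)).1 = F (dadd p n) /\
   (S (dadd p n, m)).2 = sval (cid (Fp (dadd p n) m)).
  case: cid => u [su du Fu] /=.
  have [s1 d1 d2 e] := HS (dadd p n, m).
  apply: uf_eq => //; first by rewrite d1 Fd.
  by rewrite d2 du.
  by rewrite -e.
have XP : is_ipath X.
  split.
  - exact: Xd.
  - by move=> p; apply: deg0_vid.
  - move=> p n m; rewrite /X.
    have [s1 d1 d2 e] := HS (p, n).
    have [k1 k2] := key p n m; rewrite k2.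
    case: cid => u [su du Fu] /=.
    by rewrite -su /= e src_comp.
  - move=> p n m; rewrite /X.
    have [s1 d1 d2 e] := HS (p, n).
    have [k1 k2] := key p n m; rewrite k2.
    case: cid => u [su du Fu] /=.
    have [s3 d3 d4 e3] := HS (p, dadd n m).
    have su' : ksrc L (S (p, n)).2 = krng L u by rewrite -su /= e src_comp.
    have [] := @uf_eq (S (p, dadd n m)).1 (S (p, dadd n m)).2 (S (p,n)).1
                 (kcomp L (S (p, n)).2 u) s3 _ _ _ _.
    + by rewrite rng_comp.
    + by rewrite d3 d1.
    + by rewrite d4 deg_comp // d2 du.
    + by rewrite -e3 Defs.compA // -e -Fu -daddA.
    by move=> _ ->.
exists (IPath XP) => q /=; rewrite /X.
have [s1 d1 d2 e] := HS (@dzero k, q).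
rewrite /= dadd0n in e.
have b0 := deg0_vid d1.
rewrite e {1}b0.
have -> : krng L (S (@dzero k, q)).1 = krng L (S (@dzero k, q)).2.
  by rewrite -s1 {2}b0 src_vid.
by rewrite comp_vidl.
Qed.

Arguments mk_ipath {F}.

Lemma cyl_vid (v : kvert L) y : cyl (kvid L v) y <-> y (@dzero k) (@dzero k) = kvid L v.
Proof. by rewrite /cyl /= deg_vid. Qed.

Lemma concat_ex (a : kpath L) y : cyl (kvid L (ksrc L a)) y ->
  exists z, kprefix_spec a y z.
Proof.
move=> /cyl_vid y0.
have ya q : ksrc L a = krng L (y (@dzero k) q).
  by rewrite ip_rng y0 rng_vid.
have : forall q, exists bc : kpath L * kpath L,
   [/\ ksrc L bc.1 = krng L bc.2, kdeg L bc.1 = q, kdeg L bc.2 = kdeg L a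
    & kcomp L a (y (@dzero k) q) = kcomp L bc.1 bc.2].
  move=> q.
  have hd : kdeg L (kcomp L a (y (@dzero k) q)) = dadd q (kdeg L a).
    by rewrite deg_comp // ip_deg daddC.
  by have [bc [? _]] := unique_factorization hd; exists bc.
case/choice => S HS.
pose F q := (S q).1.
have Fd q : kdeg L (F q) = q by have [] := HS q.
have Fp : forall q r, exists u, [/\ ksrc L (F q) = krng L u, kdeg L u = r &
                           F (dadd q r) = kcomp L (F q) u].
  move=> q r.
  have [s1 d1 d2 e1] := HS q.
  have [s2 d3 d4 e2] := HS (dadd q r).
  have ys := ip_src y (@dzero k) q r; rewrite dadd0n in ys.
  have yc := ip_comp y (@dzero k) q r; rewrite dadd0n in yc.
  have st : ksrc L (S q).2 = krng L (y q r).
    by rewrite -ys -(src_comp (ya q)) e1 src_comp.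
  have hd : kdeg L (kcomp L (S q).2 (y q r)) = dadd r (kdeg L a).
    by rewrite deg_comp // d2 ip_deg daddC.
  have [[u v] [[suv du dv euv] _]] := unique_factorization hd.
  simpl in suv, du, dv, euv.
  have sFu : ksrc L (F q) = krng L u.
    by rewrite /F s1 -(rng_comp st) euv rng_comp.
  exists u; split => //.
  have [] := @uf_eq (S (dadd q r)).1 (S (dadd q r)).2 (kcomp L (F q) u) v s2 _ _ _ _.
  + by rewrite src_comp.
  + by rewrite d3 deg_comp ?du ?Fd.
  + by rewrite d4 dv.
  + rewrite -e2 -yc Defs.compA ?ya // e1 -Defs.compA // euv Defs.compA //.
  by [].
have [x Hx] := mk_ipath Fd Fp.
exists x; split.
  rewrite Hx.
  have [s1 d1 d2 e1] := HS (kdeg L a).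
  have [] := @uf_eq a (y (@dzero k) (kdeg L a)) (S (kdeg L a)).1 (S (kdeg L a)).2 (ya _) s1 _ _ e1.
  + by rewrite d1.
  + by rewrite d2 ip_deg.
  by [].
apply: ipath_ext => q /=; rewrite dadd0n.
have xc := ip_comp x (@dzero k) (kdeg L a) q; rewrite dadd0n in xc.
have xs := ip_src x (@dzero k) (kdeg L a) q; rewrite dadd0n in xs.
have xa : x (@dzero k) (kdeg L a) = a.
  rewrite Hx.
  have [s1 d1 d2 e1] := HS (kdeg L a).
  have [] := @uf_eq a (y (@dzero k) (kdeg L a)) (S (kdeg L a)).1 (S (kdeg L a)).2 (ya _) s1 _ _ e1.
  + by rewrite d1.
  + by rewrite d2 ip_deg.
  by [].
have Fq : F (dadd (kdeg L a) q) = kcomp L a (y (@dzero k) q).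
  rewrite daddC.
  have [s1 d1 d2 e1] := HS (dadd q (kdeg L a)).
  have yc := ip_comp y (@dzero k) q (kdeg L a); rewrite dadd0n in yc.
  have ys := ip_src y (@dzero k) q (kdeg L a); rewrite dadd0n in ys.
  have [] := @uf_eq (S (dadd q (kdeg L a))).1 (S (dadd q (kdeg L a))).2
     (kcomp L a (y (@dzero k) q)) (y q (kdeg L a)) s1 _ _ _ _.
  + rewrite src_comp ?ya //.
  + by rewrite d1 deg_comp ?ya // ip_deg daddC.
  + by rewrite d2 ip_deg.
  + by rewrite -e1 -yc Defs.compA.
  by [].
rewrite xa in xc xs.
have [] := @uf_eq a (x (kdeg L a) q) a (y (@dzero k) q) xs (ya _) erefl _ _.
- by rewrite !ip_deg.
- by rewrite xc Hx Fq.
by [].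
Qed.

Lemma spec_uniq (a : kpath L) y z1 z2 :
  kprefix_spec a y z1 -> kprefix_spec a y z2 -> z1 = z2.
Proof.
have H z q : kprefix_spec a y z ->
   z (@dzero k) (dadd (kdeg L a) q) = kcomp L a (y (@dzero k) q).
  move=> [za zs].
  have := ip_comp z (@dzero k) (kdeg L a) q; rewrite dadd0n za => <-.
  by rewrite -zs /= dadd0n.
move=> h1 h2; apply: ipath_ext => q.
have c1 := ip_comp z1 (@dzero k) q (kdeg L a); rewrite dadd0n in c1.
have c2 := ip_comp z2 (@dzero k) q (kdeg L a); rewrite dadd0n in c2.
have s1 := ip_src z1 (@dzero k) q (kdeg L a); rewrite dadd0n in s1.
have s2 := ip_src z2 (@dzero k) q (kdeg L a); rewrite dadd0n in s2.
have [] := uf_eq s1 s2 _ _ _.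
- by rewrite !ip_deg.
- by rewrite !ip_deg.
- by rewrite c1 c2 daddC (H _ _ h1) (H _ _ h2).
by [].
Qed.

Arguments spec_uniq {a y z1 z2}.

Lemma kprefix_spec_ok (a : kpath L) y : cyl (kvid L (ksrc L a)) y ->
  kprefix_spec a y (kprefix a y).
Proof.
move=> hy; rewrite /kprefix; case: pselect => [H|H].
  by case: cid.
by exfalso; apply: H; exact: concat_ex.
Qed.

Arguments kprefix_spec_ok {a y}.

Lemma kprefix_eq (a : kpath L) y z : cyl (kvid L (ksrc L a)) y ->
  kprefix_spec a y z -> kprefix a y = z.
Proof. by move=> hy hz; exact: (spec_uniq (kprefix_spec_ok hy) hz). Qed.

Arguments kprefix_eq {a y z}.

Lemma kprefix_cyl (a : kpath L) y : cyl (kvid L (ksrc L a)) y -> cyl a (kprefix a y).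
Proof. by move=> /kprefix_spec_ok []. Qed.

Arguments kprefix_cyl {a y}.

Lemma kprefixK (a : kpath L) y : cyl (kvid L (ksrc L a)) y ->
  kshift (kdeg L a) (kprefix a y) = y.
Proof. by move=> /kprefix_spec_ok []. Qed.

Arguments kprefixK {a y}.

Lemma kprefix_vid (v : kvert L) y : cyl (kvid L (ksrc L (kvid L v))) y ->
  kprefix (kvid L v) y = y.
Proof.
move=> hy; apply: kprefix_eq => //; split.
  by move: hy; rewrite src_vid.
by rewrite deg_vid shift0.
Qed.

Lemma cyl_rng (a : kpath L) z : cyl a z -> cyl (kvid L (krng L a)) z.
Proof.
move=> za; apply/cyl_vid; rewrite ip_vid; congr kvid.
by rewrite -(ip_rng z (@dzero k) (kdeg L a)) za.
Qed.

Arguments cyl_rng {a z}.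

Lemma kprefix_comp (a b : kpath L) y : ksrc L a = krng L b ->
  cyl (kvid L (ksrc L b)) y ->
  kprefix (kcomp L a b) y = kprefix a (kprefix b y).
Proof.
move=> ab hy.
have hb : cyl (kvid L (ksrc L a)) (kprefix b y).
  by rewrite ab; apply: cyl_rng; exact: kprefix_cyl.
apply: kprefix_eq; first by rewrite src_comp.
split.
  rewrite deg_comp //.
  have := ip_comp (kprefix a (kprefix b y)) (@dzero k) (kdeg L a) (kdeg L b).
  rewrite dadd0n => <-.
  rewrite (kprefix_cyl hb).
  have := kprefixK hb => /(f_equal (fun z : ipath L => z (@dzero k) (kdeg L b))) /=.
  by rewrite dadd0n => ->; rewrite (kprefix_cyl hy).
by rewrite deg_comp // daddC -shift_shift kprefixK // kprefixK.
Qed.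

Lemma kprefix_cover (m : NN k) x :
  cyl (kvid L (ksrc L (x (@dzero k) m))) (kshift m x) /\
  kprefix (x (@dzero k) m) (kshift m x) = x.
Proof.
have h : cyl (kvid L (ksrc L (x (@dzero k) m))) (kshift m x).
  apply/cyl_vid => /=; rewrite dadd0n ip_vid; congr kvid.
  by rewrite (ip_src x (@dzero k) m (@dzero k)) dadd0n.
split => //; apply: kprefix_eq => //; split; rewrite ip_deg //.
Qed.

Lemma kprefix_inj (a : kpath L) y1 y2 : cyl (kvid L (ksrc L a)) y1 ->
  cyl (kvid L (ksrc L a)) y2 -> kprefix a y1 = kprefix a y2 -> y1 = y2.
Proof. by move=> h1 h2 e; rewrite -(kprefixK h1) -(kprefixK h2) e. Qed.

Arguments kprefix_inj {a y1 y2}.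
Arguments kprefix_comp {a b y}.
Arguments kprefix_vid {v y}.
End Comb.
Arguments uf_eq {k L b1 c1 b2 c2}.
Arguments deg0_vid {k L a}.
Arguments mk_ipath {k L F}.
Arguments spec_uniq {k L a y z1 z2}.
Arguments kprefix_spec_ok {k L a y}.
Arguments kprefix_eq {k L a y z}.
Arguments kprefix_cyl {k L a y}.
Arguments kprefixK {k L a y}.
Arguments cyl_rng {k L a z}.
Arguments kprefix_inj {k L a y1 y2}.
Arguments kprefix_comp {k L a b y}.
Arguments kprefix_vid {k L v y}.
Arguments kprefix_cover {k L}.
Arguments ip_deg {k L}.
Arguments shift_shift {k L}.


Import Order.TTheory GRing.Theory Num.Theory.

Section RNsec.
Context d (X : measurableType d) (R : realType) (mu : probability X R).
Local Open Scope ereal_scope.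

Definition goodmap (D : set X) (tau : X -> X) := [/\ measurable D,
  (forall x y, D x -> D y -> tau x = tau y -> x = y),
  (forall E, measurable E -> E `<=` D -> measurable (tau @` E)),
  (forall E, measurable E -> E `<=` D -> mu E = 0 -> mu (tau @` E) = 0) &
  (forall E, measurable E -> E `<=` D -> mu (tau @` E) = 0 -> mu E = 0)].

Section nu.
Variables (D : set X) (tau : X -> X).
Hypothesis hg : goodmap D tau.

Definition nu_ (A : set X) := mu (tau @` (A `&` D)).

Let nu0 : nu_ set0 = 0.
Proof. by rewrite /nu_ set0I image_set0 measure0. Qed.

Let nu_ge0 A : 0 <= nu_ A.
Proof. exact: measure_ge0. Qed.

Let nu_sa : semi_sigma_additive nu_.
Proof.
case: hg => mD inj mimg _ _.
move=> F mF tF mUF; rewrite /nu_ setI_bigcupl image_bigcup.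
apply: measure_semi_sigma_additive.
- by move=> n; apply: mimg; [exact: measurableI|exact: subIsetr].
- move=> i j _ _ [z [[x [Fix Dx] <-] [y [Fjy Dy] e]]].
  have xy : y = x by apply: inj.
  by apply: tF => //; exists x; split => //; rewrite -xy.
- apply: bigcup_measurable => n _.
  by apply: mimg; [exact: measurableI|exact: subIsetr].
Qed.

HB.instance Definition _ := isMeasure.Build _ _ _ nu_ nu0 nu_ge0 nu_sa.

Let nu_fin : fin_num_fun nu_.
Proof.
case: hg => mD inj mimg _ _ U mU.
apply: fin_num_measure.
by apply: mimg; [exact: measurableI|exact: subIsetr].
Qed.

HB.instance Definition _ := Measure_isFinite.Build _ _ _ nu_ nu_fin.

Lemma nu_ac : nu_ `<< mu.
Proof.
case: hg => mD inj mimg ac _.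
move=> N N0 A mA AN; rewrite /nu_; apply: ac.
- exact: measurableI.
- exact: subIsetr.
- apply: N0; first exact: measurableI.
  by move=> x [Ax _]; apply: AN.
Qed.

Lemma good_RN : pos_RN_deriv mu D tau.
Proof.
have [f [f0 intf fE]] := radon_nikodym_finite nu_ac.
have mf : measurable_fun setT f := measurable_int _ intf.
case: hg => mD inj mimg ac ps.
exists f; split.
  split.
  - exact: measurable_funS mf.
  - by move=> x _; exact: f0.
  - move=> E mE ED; split; first exact: mimg.
    transitivity (nu_ E); first by rewrite /nu_ setIidl.
    exact: fE.
pose N := D `&` (f @^-1` [set 0]).
have mN : measurable N.
  apply: measurableI => //; rewrite -[X in measurable X]setTI; apply: mf => //.
exists N; split => //.
  apply: ps => //; first exact: subIsetl.
  transitivity (nu_ N); first by rewrite /nu_ setIidl //; exact: subIsetl.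
  rewrite (fE N mN); apply: integral0_eq => x [_ ->] //.
move=> x /= /not_implyP [Dx fx]; split => //=.
by apply/eqP; rewrite eq_le f0 andbT leNgt; apply/negP.
Qed.

End nu.

Lemma RN_null D tau f E : measurable D -> is_RN_deriv mu D tau f ->
  {ae mu, forall x, D x -> 0 < f x} -> measurable E -> E `<=` D ->
  mu (tau @` E) = 0 -> mu E = 0.
Proof.
move=> mD [mf f0 H] [N2 [mN2 N20 sN2]] mE ED e0.
have [_ e] := H E mE ED.
have : \int[mu]_(x in E) `|f x| = 0.
  rewrite -e0 e; apply: eq_integral => x /[!inE] Ex.
  by rewrite gee0_abs //; apply: f0; exact: ED.
move/(ae_eq_integral_abs mu mE (measurable_funS mD ED mf)) => [N1 [mN1 N10 sN1]].
apply/negligibleP => //; exists (N1 `|` N2); split.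
- exact: measurableU.
- by transitivity (mu N1); [exact: measureU0|].
move=> x Ex; have [fx0|fx0] := eqVneq (f x) 0.
  right; apply: sN2 => /= h; have := h (ED x Ex); by rewrite fx0 ltxx.
left; apply: sN1 => /= h; by rewrite (h Ex) eqxx in fx0.
Qed.

Lemma good_comp D1 D2 t1 t2 : goodmap D1 t1 -> goodmap D2 t2 ->
  t1 @` D1 `<=` D2 -> goodmap D1 (t2 \o t1).
Proof.
move=> [mD1 i1 m1 a1 p1] [mD2 i2 m2 a2 p2] sub.
have sE E : E `<=` D1 -> t1 @` E `<=` D2.
  by move=> ED y [x Ex <-]; apply: sub; exists x => //; exact: ED.
split => //.
- move=> x y Dx Dy /= e; apply: i1 => //; apply: i2 => //; apply: sub.
    by exists x.
  by exists y.
- by move=> E mE ED; rewrite -image_comp; apply: m2 => //; [exact: m1|exact: sE].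
- by move=> E mE ED E0; rewrite -image_comp; apply: a2 => //; [exact: m1|exact: sE|exact: a1].
- by move=> E mE ED E0; apply: p1 => //; apply: p2 => //; [exact: m1|exact: sE|rewrite image_comp].
Qed.

Lemma good_ext D t1 t2 : (forall x, D x -> t1 x = t2 x) -> goodmap D t1 -> goodmap D t2.
Proof.
move=> e.
have iE E : E `<=` D -> t1 @` E = t2 @` E.
  move=> ED; apply/seteqP; split => y [x Ex <-]; exists x => //; rewrite e //; exact: ED.
move=> [mD i m a p]; split => //.
- by move=> x y Dx Dy; rewrite -!e //; exact: i.
- by move=> E mE ED; rewrite -iE //; exact: m.
- by move=> E mE ED; rewrite -iE //; exact: a.
- by move=> E mE ED; rewrite -iE //; exact: p.
Qed.

End RNsec.

Section Main.
Variables (R : realType) (k : nat) (L : kgraph k) (x0 : ipath L)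
  (p : probability (IPspace x0) R).

Lemma mcyl (a : kpath L) : measurable (cyl a : set (IPspace x0)).
Proof. by apply: sub_sigma_algebra; exists a. Qed.

Hypothesis hpre : forall a : kpath L,
     measurable_fun (cyl (kvid L (ksrc L a)) : set (IPspace x0))
       (kprefix a : IPspace x0 -> IPspace x0).
Hypothesis hedge : forall a : kpath L, kg_edge a ->
     abs_cont_on p (cyl (kvid L (ksrc L a))) (kprefix a) /\
     pos_RN_deriv p (cyl (kvid L (ksrc L a))) (kprefix a).

Definition good (a : kpath L) := @goodmap _ _ _ p (cyl (kvid L (ksrc L a)) : set (IPspace x0))
   (kprefix a : IPspace x0 -> IPspace x0).

Lemma good_inj a : forall x y : IPspace x0, cyl (kvid L (ksrc L a)) x ->
  cyl (kvid L (ksrc L a)) y -> kprefix a x = kprefix a y -> x = y.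
Proof. by move=> x y hx hy; apply: kprefix_inj. Qed.

Lemma good_vid v : good (kvid L v).
Proof.
apply: (@good_ext _ _ _ p _ id).
  by move=> x hx; rewrite kprefix_vid.
split => //.
- exact: mcyl.
- by move=> E mE ED; rewrite image_id.
- by move=> E mE ED; rewrite image_id.
- by move=> E mE ED; rewrite image_id.
Qed.

Lemma good_edge a : kg_edge a -> good a.
Proof.
move=> /hedge [ac [f [[mf f0 H] pos]]]; split.
- exact: mcyl.
- exact: good_inj.
- by move=> E mE ED; have [] := H E mE ED.
- exact: ac.
- by move=> E mE ED; apply: (@RN_null _ _ _ p _ _ f E (mcyl _) (And3 mf f0 H) pos mE ED).
Qed.

Lemma good_compose a b : ksrc L a = krng L b -> good a -> good b -> good (kcomp L a b).
Proof.
move=> ab ga gb.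
rewrite /good src_comp //.
apply: (@good_ext _ _ _ p _ (kprefix a \o kprefix b)).
  by move=> x hx /=; rewrite kprefix_comp.
apply: good_comp gb ga _.
move=> y [x hx <-]; rewrite ab; apply: cyl_rng; exact: kprefix_cyl.
Qed.

Lemma good_all n (a : kpath L) : (\sum_(i < k) kdeg L a i)%N = n -> good a.
Proof.
elim: n a => [|n IH] a hs.
  have da : kdeg L a = @dzero k.
    apply: functional_extensionality_dep => i; rewrite /dzero.
    by move/eqP: hs; rewrite sum_nat_eq0 => /forallP /(_ i) /eqP.
  by rewrite (deg0_vid da); exact: good_vid.
have [i Hi] : exists i, (0 < kdeg L a i)%N.
  case: (pickP (fun i => (0 < kdeg L a i)%N)) => [i Hi|H]; first by exists i.
  exfalso; move: hs; rewrite big1 // => i _.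
  by have := H i => /negbT; rewrite lt0n negbK => /eqP.
pose m := fun j => (kdeg L a j - evec i j)%N.
have dm : kdeg L a = dadd (evec i) m.
  apply: functional_extensionality_dep => j; rewrite /dadd /m /evec.
  by case: eqP => [->|_] /=; [rewrite subnKC | rewrite subn0 add0n].
have [[e b] [[seb de db eab] _]] := unique_factorization dm.
simpl in seb, de, db, eab; rewrite eab.
apply: good_compose => //.
  by apply: good_edge; exists i.
apply: IH.
have : (\sum_(j < k) kdeg L a j = \sum_(j < k) evec i j + \sum_(j < k) m j)%N.
  by rewrite -big_split /=; apply: eq_bigr => j _; rewrite dm.
have -> : (\sum_(j < k) evec i j = 1)%N.
  rewrite (bigD1 i) //= /evec eqxx big1 // => j /negPf ->; done.
by rewrite hs db add1n => [[]].
Qed.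

End Main.

Theorem mainTheorem6 (R : realType) (k : nat) (L : kgraph k) (x0 : ipath L)
  (p : probability (IPspace x0) R) :
  kg_finite L -> kg_strongly_connected L -> kg_no_sources L ->
  (forall a : kpath L,
     measurable_fun (cyl (kvid L (ksrc L a)) : set (IPspace x0))
       (kprefix a : IPspace x0 -> IPspace x0)) ->
  (forall n : NN k,
     measurable_fun (setT : set (IPspace x0))
       (kshift n : IPspace x0 -> IPspace x0)) ->
  (forall v : kvert L, (0 < p (cyl (kvid L v) : set (IPspace x0)))%E) ->
  (forall a : kpath L, kg_edge a ->
     abs_cont_on p (cyl (kvid L (ksrc L a))) (kprefix a) /\
     pos_RN_deriv p (cyl (kvid L (ksrc L a))) (kprefix a)) ->
  Lambda_SBFS p (fun a : kpath L => (cyl (kvid L (ksrc L a)) : set (IPspace x0)))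
                (fun a : kpath L => (kprefix a : IPspace x0 -> IPspace x0))
                (fun n : NN k => (kshift n : IPspace x0 -> IPspace x0)).
Proof.
move=> hfin _ _ hpre _ hpos hedge.
have gall a : @good R k L x0 p a.
  exact: (@good_all R k L x0 p hedge _ a erefl).
split.
- move=> m; split; last first.
    by move=> a /= <- x hx; exact: kprefixK.
  split.
  + exact: hfin.
  + by move=> a _; split; [exact: mcyl|exact: hpre].
  + exists set0; split => //.
    move=> x /= hx; apply: hx.
    have [hc he] := kprefix_cover m x.
    exists (x (@dzero k) m); first exact: ip_deg.
    by exists (kshift m x).
  + move=> a b /= da db ab; exists set0; split => //.
    move=> z [[x hx <-] [y hy e]]; apply: ab.
    have h1 := kprefix_cyl hx; have h2 := kprefix_cyl hy.
    rewrite /cyl /= in h1 h2.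
    by rewrite -h1 -h2 e da db.
  + by move=> a _; apply: good_RN; exact: gall.
- move=> v; split.
    by move=> x hx; exact: kprefix_vid.
  by rewrite src_vid; exact: hpos.
- move=> a b ab; split.
    exists set0; split => //.
    move=> z [[x hx <-] hn]; apply: hn.
    rewrite ab; apply: cyl_rng; exact: kprefix_cyl.
  by apply: aeW => x hx; rewrite kprefix_comp.
- by move=> m n x; exact: shift_shift.
Qed.
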